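(* Let $\mathcal V$ be a finite alphabet, $\mathcal V^*$ the set of finite strings over $\mathcal V$, $e$ an environment, $p(t)$ a probability distribution on test suites $t\in\mathcal V^*$, and $p(c)$ a probability distribution on implementations $c\in\mathcal V^*$. Let $$\mathrm{sim}_{p,e}(c_1,c_2):=\mathbb E_{t\sim p}\Big[\tfrac{1}{|t|}\sum_{k=1}^{|t|}\mathbf 1\{O_k(c_1,t\mid e)=O_k(c_2,t\mid e)\}\Big],$$ fix $s\in\mathbb N$, set $\mathrm{sim}^s_{p,e}:=(\mathrm{sim}_{p,e})^s$, and for $c\in\mathcal V^*$ define $p(\mathcal N_c^s):=\sum_{c'\in\mathcal V^*}p(c')\,\mathrm{sim}^s_{p,e}(c,c')$. If $c,c'\in\mathcal V^*$ satisfy $\mathrm{sim}^s_{p,e}(c,c')\ge 1-\varepsilon$ for some $\varepsilon\in(0,1)$, then $$|p(\mathcal N_c^s)-p(\mathcal N_{c'}^s)|\le\sqrt{2\varepsilon}.$$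
   Context: A test suite $t\in\mathcal V^*$ consists of $|t|\ge1$ test cases. For an environment $e$, an implementation $c$ and a test suite $t$, the test harness returns a deterministic output vector $O(c,t\mid e)=(O_1(c,t\mid e),\dots,O_{|t|}(c,t\mid e))\in\mathbb O^{|t|}$ for a set $\mathbb O$ of possible test outputs. The quantity $p(\mathcal N_c^s)$ is the probability measure of the fuzzy neighborhood of $c$, i.e. the expected membership $\mathbb E_{c'\sim p}[\mathrm{sim}^s_{p,e}(c,c')]$. *)

(* Defs.v *)
From mathcomp Require Import all_boot all_order all_algebra.
From mathcomp Require Import all_classical all_reals.
From mathcomp Require Import ereal esum.
Set Implicit Arguments. Unset Strict Implicit. Unset Printing Implicit Defensive.
Import Order.TTheory GRing.Theory Num.Theory.
Local Open Scope ring_scope.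
Local Open Scope classical_set_scope.

Section Defs.
Variable R : realType.

Definition is_distr (T : choiceType) (p : T -> R) : Prop :=
  (forall x, 0 <= p x) /\ (\esum_(x in [set: T]) (p x)%:E = 1)%E.

Variables (V : finType) (Env : Type) (Out : eqType).
(* O e c t k : the k-th test output (0-based) of implementation c on test
   suite t in environment e; ntests t = |t|, the number of test cases. *)
Variables (O : Env -> seq V -> seq V -> nat -> Out) (ntests : seq V -> nat).
Variable e : Env.

Definition agree_frac (t c1 c2 : seq V) : R :=
  (ntests t)%:R^-1 * \sum_(k < ntests t) ((O e c1 t k == O e c2 t k) : nat)%:R.

Definition sim (pt : seq V -> R) (c1 c2 : seq V) : R :=
  fine (\esum_(t in [set: seq V]) (pt t * agree_frac t c1 c2)%:E).

Definition sim_pow (pt : seq V -> R) (s : nat) (c1 c2 : seq V) : R :=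
  sim pt c1 c2 ^+ s.

Definition nbhd_prob (pc pt : seq V -> R) (s : nat) (c : seq V) : R :=
  fine (\esum_(c' in [set: seq V]) (pc c' * sim_pow pt s c c')%:E).

End Defs.

(* Main.v *)
Require Import Defs.
From mathcomp Require Import all_boot all_order all_algebra.
From mathcomp Require Import all_classical all_reals.
From mathcomp Require Import ereal esum.
From mathcomp Require Import lra.
Import Order.TTheory GRing.Theory Num.Theory.
Local Open Scope ring_scope.

Lemma pow_conv (R : realType) (s : nat) (x d : R) :
  0 <= x -> 0 <= d -> x + d <= 1 -> (x + d) ^+ s - x ^+ s <= 1 - (1 - d) ^+ s.
Proof.
move=> x0 d0 xd1; elim: s => [|s IH]; first by rewrite !expr0 subrr.
have hA : 0 <= (x + d) ^+ s - x ^+ s.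
  by rewrite subr_ge0 lerXn2r // ?nnegrE ?addr_ge0 // lerDl.
have hx : x ^+ s <= (1 - d) ^+ s.
  by rewrite lerXn2r // ?nnegrE //; lra.
have hx0 : 0 <= x ^+ s by rewrite exprn_ge0.
have : (x + d) * ((x + d) ^+ s - x ^+ s) <= (x + d) ^+ s - x ^+ s.
  by rewrite ler_piMl //; lra.
rewrite !exprS; nra.
Qed.

Lemma pow_key (R : realType) (s : nat) (a b m : R) :
  0 <= a -> 0 <= b -> b <= 1 -> 0 <= m -> m <= 1 -> a + 1 >= b + m ->
  b ^+ s - a ^+ s <= 1 - m ^+ s.
Proof.
move=> a0 b0 b1 m0 m1 h.
have [ba|ab] := leP b a.
  have : b ^+ s <= a ^+ s.
    by rewrite lerXn2r // nnegrE.
  have : m ^+ s <= 1 by rewrite exprn_ile1 //; lra.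
  lra.
have H := @pow_conv R s a (b - a) a0.
rewrite addrCA subrr addr0 in H.
have hm : m ^+ s <= (1 - (b - a)) ^+ s by rewrite lerXn2r // ?nnegrE //; lra.
have := H ltac:(lra) ltac:(lra); lra.
Qed.

Local Open Scope classical_set_scope.

Lemma esum_bnd (R : realType) (T : choiceType) (f g : T -> R) :
  (forall x, 0 <= f x) -> (forall x, f x <= g x) ->
  (\esum_(x in [set: T]) (g x)%:E = 1)%E ->
  (\esum_(x in [set: T]) (f x)%:E = (fine (\esum_(x in [set: T]) (f x)%:E))%:E)%E
  /\ 0 <= fine (\esum_(x in [set: T]) (f x)%:E) <= 1.
Proof.
move=> f0 fg g1.
have h0 : (0 <= \esum_(x in [set: T]) (f x)%:E)%E by apply: esum_ge0 => x _; rewrite lee_fin.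
have h1 : (\esum_(x in [set: T]) (f x)%:E <= 1)%E.
  by rewrite -g1; apply: le_esum => x _; rewrite lee_fin.
have hf : \esum_(x in [set: T]) (f x)%:E \is a fin_num.
  by rewrite ge0_fin_numE // (le_lt_trans h1) // ltey.
split; first by rewrite fineK.
by apply/andP; split; rewrite -lee_fin fineK.
Qed.

Lemma esumZ_le (R : realType) (T : choiceType) (k : R) (f : T -> R) :
  0 <= k -> (forall x, 0 <= f x) ->
  (\esum_(x in [set: T]) (k * f x)%:E <= k%:E * \esum_(x in [set: T]) (f x)%:E)%E.
Proof.
move=> k0 f0; apply: ge_ereal_sup => _ [X [finX _] <-].
rewrite (eq_fsbigr (fun x => k%:E * (f x)%:E)%E); last by move=> x _; rewrite EFinM.
rewrite -ge0_mule_fsumr; last by move=> x; rewrite lee_fin.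
apply: lee_wpmul2l; first by rewrite lee_fin.
by apply: ereal_sup_ubound; exists X.
Qed.

Lemma avg_tri (R : realType) n (f g h : 'I_n -> R) : (0 < n)%N ->
  (forall k, g k + h k <= f k + 1) ->
  n%:R^-1 * \sum_(k < n) g k + n%:R^-1 * \sum_(k < n) h k
  <= n%:R^-1 * \sum_(k < n) f k + 1.
Proof.
move=> n0 H.
rewrite [X in _ <= _ + X](_ : 1 = n%:R^-1 * \sum_(k < n) 1); last first.
  rewrite sumr_const card_ord mulVf //; by rewrite pnatr_eq0 -lt0n.
rewrite -!mulrDr; apply: ler_wpM2l; first by rewrite invr_ge0 ler0n.
rewrite -!big_split /=.
by apply: ler_sum => k _.
Qed.

Lemma avg_bnd (R : realType) n (f : 'I_n -> R) : (0 < n)%N ->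
  (forall k, 0 <= f k <= 1) ->
  0 <= n%:R^-1 * \sum_(k < n) f k <= 1.
Proof.
move=> n0 H; apply/andP; split.
  by rewrite mulr_ge0 ?invr_ge0 ?ler0n // sumr_ge0 // => k _; case/andP: (H k).
rewrite ler_pdivrMl ?ltr0n // mulr1.
have -> : (n%:R : R) = \sum_(k < n) 1 by rewrite sumr_const card_ord.
by apply: ler_sum => k _; case/andP: (H k).
Qed.

Lemma ind_tri (R : realType) (Out : eqType) (x y z : Out) :
  ((y == z) : nat)%:R + ((x == y) : nat)%:R <= ((x == z) : nat)%:R + 1 :> R.
Proof.
have [exy|nxy] := eqVneq x y.
  subst; have [eyz|nyz] := eqVneq y z; first by subst; rewrite ?eqxx.
  by rewrite ?(negbTE nyz) /= ?add0r ?addr0.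
rewrite ?(negbTE nxy) /= ?addr0; case: (y == z); case: (x == z); rewrite /=; lra.
Qed.

Theorem theorem4p10 (R : realType) (V : finType) (Env : Type) (Out : eqType)
  (O : Env -> seq V -> seq V -> nat -> Out) (ntests : seq V -> nat) (e : Env)
  (Hn : forall t, (0 < ntests t)%N)
  (pt pc : seq V -> R) (Hpt : is_distr pt) (Hpc : is_distr pc)
  (s : nat) (c c' : seq V) (eps : R) (Heps0 : 0 < eps) (Heps1 : eps < 1)
  (Hsim : 1 - eps <= sim_pow O ntests e pt s c c') :
  `|nbhd_prob O ntests e pc pt s c - nbhd_prob O ntests e pc pt s c'|
    <= Num.sqrt (2 * eps).
Proof.
case: Hpt => pt0 pt1; case: Hpc => pc0 pc1.
have afb : forall t x y, 0 <= agree_frac R O ntests e t x y <= 1.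
  move=> t x y; apply: avg_bnd => // k.
  by case: (_ == _); rewrite /= ?ler01 ?lexx.
have aft : forall t x y z, agree_frac R O ntests e t y z + agree_frac R O ntests e t x y
    <= agree_frac R O ntests e t x z + 1.
  by move=> t x y z; apply: avg_tri => // k; apply: ind_tri.
have afs : forall t x y, agree_frac R O ntests e t x y = agree_frac R O ntests e t y x.
  move=> t x y; rewrite /agree_frac; congr (_ * _); apply: eq_bigr => k _.
  by rewrite eq_sym.
have afge0 : forall t x y, 0 <= pt t * agree_frac R O ntests e t x y.
  by move=> t x y; apply: mulr_ge0 => //; case/andP: (afb t x y).
have simb : forall x y,
    (\esum_(t in [set: seq V]) (pt t * agree_frac R O ntests e t x y)%:E
      = (sim O ntests e pt x y)%:E)%E /\ 0 <= sim O ntests e pt x y <= 1.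
  move=> x y; rewrite /sim.
  have [h1 h2] := @esum_bnd R _ (fun t => pt t * agree_frac R O ntests e t x y) pt
     (fun t => mulr_ge0 (pt0 t) (proj1 (andP (afb t x y))))
     (fun t => ler_piMr (pt0 t) (proj2 (andP (afb t x y)))) pt1.
  by split.
have simt : forall x y z, sim O ntests e pt y z + sim O ntests e pt x y
    <= sim O ntests e pt x z + 1.
  move=> x y z.
  have E : (\esum_(t in [set: seq V])
      ((pt t * agree_frac R O ntests e t y z)%:E + (pt t * agree_frac R O ntests e t x y)%:E)
    <= \esum_(t in [set: seq V]) ((pt t * agree_frac R O ntests e t x z)%:E + (pt t)%:E))%E.
    apply: le_esum => t _; rewrite -!EFinD lee_fin.
    have := aft t x y z; have := pt0 t; nra.
  rewrite !esumD in E; try (by move=> t _; rewrite lee_fin); try (by move=> t _; rewrite lee_fin afge0).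
  by rewrite pt1 !(proj1 (simb _ _)) -!EFinD lee_fin in E.
have sims : forall x y, sim O ntests e pt x y = sim O ntests e pt y x.
  by move=> x y; rewrite /sim; congr fine; apply: eq_esum => t _; rewrite afs.
have Hs : 1 - eps <= sim O ntests e pt c c' ^+ s by [].
have key : forall x, `|sim_pow O ntests e pt s c x - sim_pow O ntests e pt s c' x| <= eps.
  move=> x; rewrite /sim_pow ler_norml.
  have [_ /andP[a0 a1]] := simb c x.
  have [_ /andP[b0 b1]] := simb c' x.
  have [_ /andP[m0 m1]] := simb c c'.
  have h1 := simt c c' x.
  have h2 := simt c' c x; rewrite (sims c' c) in h2.
  have k1 := @pow_key R s _ _ _ a0 b0 b1 m0 m1 h1.
  have k2 := @pow_key R s _ _ _ b0 a0 a1 m0 m1 h2.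
  apply/andP; split; lra.
have spb : forall y x, 0 <= sim_pow O ntests e pt s y x <= 1.
  move=> y x; have [_ /andP[a0 a1]] := simb y x.
  by rewrite /sim_pow exprn_ge0 ?exprn_ile1.
have spge0 : forall y x, 0 <= pc x * sim_pow O ntests e pt s y x.
  by move=> y x; apply: mulr_ge0 => //; case/andP: (spb y x).
have nbb : forall y,
   (\esum_(x in [set: seq V]) (pc x * sim_pow O ntests e pt s y x)%:E
      = (nbhd_prob O ntests e pc pt s y)%:E)%E.
  move=> y; rewrite /nbhd_prob.
  have [h1 h2] := @esum_bnd R _ (fun x => pc x * sim_pow O ntests e pt s y x) pc
     (spge0 y) (fun x => ler_piMr (pc0 x) (proj2 (andP (spb y x)))) pc1.
  exact: h1.
have one : forall y y', (forall x, sim_pow O ntests e pt s y x <= sim_pow O ntests e pt s y' x + eps) ->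
    nbhd_prob O ntests e pc pt s y <= nbhd_prob O ntests e pc pt s y' + eps.
  move=> y y' H.
  have E : (\esum_(x in [set: seq V]) (pc x * sim_pow O ntests e pt s y x)%:E
     <= \esum_(x in [set: seq V]) ((pc x * sim_pow O ntests e pt s y' x)%:E + (eps * pc x)%:E))%E.
    apply: le_esum => x _; rewrite -EFinD lee_fin.
    have := H x; have := pc0 x; nra.
  rewrite esumD in E; last 2 first.
    by move=> x _; rewrite lee_fin.
    by move=> x _; rewrite lee_fin mulr_ge0 // ltW.
  have Z := @esumZ_le R _ eps pc (ltW Heps0) pc0.
  rewrite pc1 mule1 in Z.
  have := le_trans E (leeD2l _ Z).
  by rewrite !nbb -EFinD lee_fin.
have := one c c'; have := one c' c.
have L : forall x, sim_pow O ntests e pt s c x <= sim_pow O ntests e pt s c' x + eps.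
  by move=> x; have := key x; rewrite ler_norml; lra.
have L' : forall x, sim_pow O ntests e pt s c' x <= sim_pow O ntests e pt s c x + eps.
  by move=> x; have := key x; rewrite ler_norml; lra.
move=> /(_ L') h1 /(_ L) h2.
apply: (@le_trans _ _ eps).
  by rewrite ler_norml; apply/andP; split; lra.
rewrite -[X in X <= _](ger0_norm (ltW Heps0)) -sqrtr_sqr ler_sqrt; last by rewrite mulr_ge0 // ltW.
nra.
Qed.
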